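(* A large scale group $G$ has bounded geometry if and only if there is a bounded set $K\subseteq G$ such that every bounded subset $B$ of $G$ is contained in $\bigcup_{i=1}^k g_i\cdot K$ for some finitely many elements $g_1,\dots,g_k\in G$.
   Context: A large scale group is a group $G$ with a bornology $\mathcal B$ (a cover of $G$ closed under subsets and finite unions) closed under inverses and products; uniformly bounded covers are those refining $\{gB\}_{g\in G}$ for some $B\in\mathcal B$, bounded sets are members of $\mathcal B$. A large scale space $X$ has bounded geometry if it is coarsely equivalent to a large scale space $Y$ such that for every uniformly bounded cover $\mathcal U$ of $Y$ there is $N(\mathcal U)\in\mathbb N$ with every element of $\mathcal U$ having at most $N(\mathcal U)$ elements. Coarse equivalence: a coarse (preimages of bounded sets bounded) and large scale continuous (images of uniformly bounded covers refine uniformly bounded covers) map having a coarse large scale continuous map in the opposite direction such that both compositions are close to identities (close: $f(x)\in st(f'(x),\mathcal U)$ for all $x$ for some uniformly bounded $\mathcal U$, where $st(y,\mathcal U)$ is the union of members of $\mathcal U$ containing $y$). *)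

(* Defs.v *)
From HB Require Import structures.
From mathcomp Require Import all_boot.
From Stdlib Require Import List.

Set Implicit Arguments.
Unset Strict Implicit.
Unset Printing Implicit Defensive.

Definition subs (X : Type) := X -> Prop.
Definition fam (X : Type) := subs X -> Prop.

Definition subset_of {X : Type} (A B : subs X) := forall x, A x -> B x.

Definition is_cover {X : Type} (U : fam X) := forall x : X, exists2 W, U W & W x.

Definition refines {X : Type} (V U : fam X) :=
  forall W, V W -> exists2 W', U W' & subset_of W W'.

Definition st_set {X : Type} (A : subs X) (V : fam X) : subs X :=
  fun x => exists2 W, V W & (W x /\ exists y, W y /\ A y).

Definition st_pt {X : Type} (y : X) (V : fam X) : subs X :=
  fun x => exists2 W, V W & (W x /\ W y).

Definition st_fam {X : Type} (U V : fam X) : fam X :=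
  fun S => exists2 A, U A & S = st_set A V.

(* A large scale structure on X (Dydak--Hoffland, phrased with covers):
   a nonempty family of covers ("uniformly bounded covers") closed under
   coarsening-refinement (every element with >= 2 points lies in an element
   of a uniformly bounded cover) and under stars. *)
Definition is_lss {X : Type} (ub : fam X -> Prop) : Prop :=
  [/\ exists U, ub U,
      (forall U, ub U -> is_cover U),
      (forall U V, ub U -> is_cover V ->
         (forall W, V W -> (exists x y, x <> y /\ W x /\ W y) ->
            exists2 W', U W' & subset_of W W') -> ub V)
    & (forall U V, ub U -> ub V -> ub (st_fam U V))].

Definition ls_bounded {X : Type} (ub : fam X -> Prop) (B : subs X) :=
  exists U, ub U /\ exists2 W, U W & subset_of B W.

Definition preimage {X Y : Type} (f : X -> Y) (B : subs Y) : subs X :=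
  fun x => B (f x).

Definition image {X Y : Type} (f : X -> Y) (A : subs X) : subs Y :=
  fun y => exists2 x, A x & y = f x.

Definition image_fam {X Y : Type} (f : X -> Y) (U : fam X) : fam Y :=
  fun S => exists2 A, U A & S = image f A.

Definition coarse {X Y : Type} (ubX : fam X -> Prop) (ubY : fam Y -> Prop)
  (f : X -> Y) :=
  forall B, ls_bounded ubY B -> ls_bounded ubX (preimage f B).

Definition ls_continuous {X Y : Type} (ubX : fam X -> Prop)
  (ubY : fam Y -> Prop) (f : X -> Y) :=
  forall U, ubX U -> exists2 V, ubY V & refines (image_fam f U) V.

Definition close {X Y : Type} (ubY : fam Y -> Prop) (f f' : X -> Y) :=
  exists2 U, ubY U & forall x, st_pt (f' x) U (f x).

Definition coarse_equivalent {X Y : Type} (ubX : fam X -> Prop)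
  (ubY : fam Y -> Prop) :=
  exists (f : X -> Y) (g : Y -> X),
    [/\ coarse ubX ubY f /\ ls_continuous ubX ubY f,
        coarse ubY ubX g /\ ls_continuous ubY ubX g,
        close ubX (fun x => g (f x)) (fun x => x)
      & close ubY (fun y => f (g y)) (fun y => y)].

Definition at_most {X : Type} (N : nat) (W : subs X) :=
  exists l : list X, length l <= N /\ forall x, W x -> In x l.

Definition has_bounded_geometry {X : Type} (ubX : fam X -> Prop) : Prop :=
  exists (Y : Type) (ubY : fam Y -> Prop),
    [/\ is_lss ubY, coarse_equivalent ubX ubY
      & forall U, ubY U -> exists N : nat, forall W, U W -> at_most N W].

Local Open Scope group_scope.

Definition set_mul {G : groupType} (A B : subs G) : subs G :=
  fun z => exists a b, A a /\ B b /\ z = a * b.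

Definition set_inv {G : groupType} (A : subs G) : subs G :=
  fun z => A z^-1.

Definition lcoset {G : groupType} (g : G) (A : subs G) : subs G :=
  fun z => exists2 a, A a & z = g * a.

Definition is_group_bornology {G : groupType} (Bor : fam G) : Prop :=
  [/\ is_cover Bor,
      (forall A B, Bor B -> subset_of A B -> Bor A),
      (forall A B, Bor A -> Bor B -> Bor (fun x => A x \/ B x)),
      (forall A, Bor A -> Bor (set_inv A))
    & (forall A B, Bor A -> Bor B -> Bor (set_mul A B))].

Definition group_ub {G : groupType} (Bor : fam G) : fam G -> Prop :=
  fun U => is_cover U /\
    exists2 B, Bor B & refines U (fun S => exists g, S = lcoset g B).

(* Main.v *)
Require Import Defs.
From HB Require Import structures.
From mathcomp Require Import all_boot.
From Stdlib Require Import List Classical ClassicalEpsilon ProofIrrelevance.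
From mathcomp Require classical_sets.

Local Open Scope group_scope.

Definition Sep {G : groupType} (K : subs G) (X : subs G) :=
  forall s t g, X s -> X t -> lcoset g K s -> lcoset g K t -> s = t.

Lemma exists_sep (G : groupType) (K : subs G) (k0 : G) : K k0 ->
  exists A : subs G, Sep K A /\
    forall x, exists s, A s /\ exists g, lcoset g K x /\ lcoset g K s.
Proof.
move=> Kk0.
have chain : forall F : classical_sets.set (classical_sets.set G),
    classical_sets.subset F (Sep K) ->
    classical_sets.total_on F classical_sets.subset ->
    Sep K (classical_sets.bigcup F id).
  move=> F FP Ftot s t g [X FX Xs] [Y FY Yt] Hs Ht.
  have [XY|YX] := Ftot X Y FX FY.
    exact: (FP Y FY s t g (XY s Xs) Yt Hs Ht).
  exact: (FP X FX s t g Xs (YX t Yt) Hs Ht).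
have [A [SA Amax]] := @classical_sets.Zorn_bigcup G (Sep K) chain.
exists A; split=> // x.
case: (classic (A x)) => Ax.
  exists x; split=> //; exists (x * k0^-1); split; exists k0 => //;
  by rewrite -mulgA mulVg mulg1.
apply: NNPP => nex.
apply: (Amax (fun y => A y \/ y = x)).
  split; first by move=> y Ay; left.
  by move=> /(_ x (or_intror erefl)).
move=> s t g [As|->] [At|->] Hs Ht.
- exact: (SA s t g As At Hs Ht).
- by exfalso; apply: nex; exists s; split=> //; exists g.
- by exfalso; apply: nex; exists t; split=> //; exists g.
- by [].
Qed.
Set Implicit Arguments.
Unset Strict Implicit.
Local Open Scope group_scope.

Definition UG {G : groupType} (D : subs G) : fam G :=
  fun T => exists h, T = lcoset h D.

Lemma UG_ub (G : groupType) (Bor : fam G) D : Bor D -> D 1 -> group_ub Bor (UG D).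
Proof.
move=> BD D1; split.
  by move=> x; exists (lcoset x D); [exists x | exists 1; rewrite ?mulg1].
by exists D => // W [h ->]; exists (lcoset h D); [exists h | ].
Qed.

Lemma forward (G : groupType) (Bor : fam G) :
  is_group_bornology Bor ->
  has_bounded_geometry (group_ub Bor) ->
   exists2 K, Bor K &
     forall B, Bor B ->
       exists gs : list G, subset_of B (fun x => exists2 g, In g gs & lcoset g K x).
Proof.
case=> Bcov Bsub Bun Binv Bmul.
move=> [Y [ubY [Ylss [f [g [[fc fcont] [gc gcont] cgf cfg]]] Nb]]].
case: cgf => U [Ucov [C BC Uref]] Hx.
exists (set_mul (set_inv C) C); first by apply: Bmul => //; apply: Binv.
move=> B BB.
have [C1 BC1 C11] := Bcov 1.
pose B1 := fun x => B x \/ C1 x.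
have BB1 : Bor B1 by apply: Bun.
have [V Vub Vref] := fcont _ (UG_ub BB1 (or_intror C11)).
have [W VW sub] := Vref (Defs.image f (lcoset 1 B1)) (ex_intro2 _ _ _ (ex_intro _ 1 erefl) erefl).
have [N HN] := Nb V Vub.
have [l [_ Hl]] := HN W VW.
exists (map g l) => x Bx.
exists (g (f x)).
  apply: in_map; apply: Hl; apply: sub; exists x => //.
  by exists x; [left | rewrite mul1g].
have [W' UW' [W'gfx W'x]] := Hx x.
have [T [h ->] sub'] := Uref W' UW'.
have [c1 Cc1 e1] := sub' _ W'gfx.
have [c2 Cc2 e2] := sub' _ W'x.
exists (c1^-1 * c2).
  by exists c1^-1, c2; split; [rewrite /set_inv invgK | split].
by rewrite e1 e2 mulgA mulgK.
Qed.
Set Implicit Arguments.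
Unset Strict Implicit.
Local Open Scope group_scope.

Definition ubS {G : groupType} (Bor : fam G) (A : subs G) :
  fam {x : G | A x} -> Prop :=
  fun V => is_cover V /\ exists2 C, Bor C &
    forall W, V W -> exists h, forall y, W y -> lcoset h C (proj1_sig y).

Definition VY {G : groupType} (A : subs G) (D : subs G) : fam {x : G | A x} :=
  fun T => exists h, T = fun y => lcoset h D (proj1_sig y).

Lemma VY_ub (G : groupType) (Bor : fam G) (A D : subs G) :
  Bor D -> D 1 -> ubS Bor (@VY _ A D).
Proof.
move=> BD D1; split.
  move=> y; exists (fun y' => lcoset (proj1_sig y) D (proj1_sig y')).
    by exists (proj1_sig y).
  by exists 1; rewrite ?mulg1.
by exists D => // W [h ->]; exists h.
Qed.

Lemma lss_ubS (G : groupType) (Bor : fam G) (A L : subs G) :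
  is_group_bornology Bor -> Bor L -> L 1 -> is_lss (@ubS _ Bor A).
Proof.
case=> Bcov Bsub Bun Binv Bmul BL L1.
split.
- by exists (@VY _ A L); apply: VY_ub.
- by move=> U [].
- move=> U V [_ [C BC HC]] Vcov Href; split=> //.
  exists (fun x => C x \/ L x); first exact: Bun.
  move=> W VW.
  case: (classic (exists x y, x <> y /\ W x /\ W y)) => [two|ntwo].
    have [W' UW' sub] := Href W VW two.
    have [h Hh] := HC W' UW'.
    exists h => y Wy; have [c Cc e] := Hh y (sub y Wy).
    by exists c; [left|].
  case: (classic (exists y0, W y0)) => [[y0 Wy0]|nW].
    exists (proj1_sig y0) => y Wy.
    case: (classic (y = y0)) => [->|ne].
      by exists 1; [right|rewrite mulg1].
    by exfalso; apply: ntwo; exists y, y0.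
  by exists 1 => y Wy; exfalso; apply: nW; exists y.
- move=> U V [Ucov [C BC HC]] [Vcov [D BD HD]]; split.
    move=> y; have [B UB By] := Ucov y; have [W VW Wy] := Vcov y.
    exists (st_set B V); first by exists B.
    by exists W => //; split=> //; exists y.
  exists (set_mul (set_mul C (set_inv D)) D).
    by apply: (Bmul) => //; apply: (Bmul) => //; apply: (Binv).
  move=> T [B UB ->].
  have [h Hh] := HC B UB.
  exists h => y [W VW [Wy [z [Wz Bz]]]].
  have [h' Hh'] := HD W VW.
  have [c Cc ec] := Hh z Bz.
  have [d Dd ed] := Hh' z Wz.
  have [d' Dd' ed'] := Hh' y Wy.
  exists (c * d^-1 * d').
    exists (c * d^-1), d'; split; last by [].
    by exists c, d^-1; split=> //; rewrite /set_inv invgK.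
  rewrite ed' !mulgA.
  have -> : h * c = h' * d by rewrite -ec -ed.
  by rewrite mulgK.
Qed.
Set Implicit Arguments.
Unset Strict Implicit.
Local Open Scope group_scope.

Lemma bndG (G : groupType) (Bor : fam G) (L D : subs G) (h : G) (B : subs G) :
  is_group_bornology Bor -> Bor L -> L 1 -> Bor D ->
  subset_of B (lcoset h D) -> ls_bounded (group_ub Bor) B.
Proof.
case=> Bcov Bsub Bun Binv Bmul BL L1 BD sub.
exists (UG (fun x => D x \/ L x)); split.
  by apply: UG_ub; [apply: Bun | right].
exists (lcoset h (fun x => D x \/ L x)); first by exists h.
by move=> x /sub [d Dd ->]; exists d; [left|].
Qed.

Lemma sig_eq (G : Type) (A : G -> Prop) (x y : {x | A x}) :
  proj1_sig x = proj1_sig y -> x = y.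
Proof.
case: x => a pa; case: y => b pb /= e; subst b; f_equal; apply: proof_irrelevance.
Qed.

Lemma backward (G : groupType) (Bor : fam G) :
  is_group_bornology Bor ->
  (exists2 K, Bor K &
     forall B, Bor B ->
       exists gs : list G, subset_of B (fun x => exists2 g, In g gs & lcoset g K x)) ->
  has_bounded_geometry (group_ub Bor).
Proof.
move=> hB; have [Bcov Bsub Bun Binv Bmul] := hB.
move=> [K BK HK].
have [C1 BC1 C11] := Bcov 1.
have [gs0 Hgs0] := HK C1 BC1.
have [g0 _ [k0 Kk0 _]] := Hgs0 1 C11.
pose L := set_mul (set_inv K) K.
have BL : Bor L by apply: (Bmul) => //; apply: (Binv).
have KL k1 k2 : K k1 -> K k2 -> L (k1^-1 * k2).
  by move=> ? ?; exists k1^-1, k2; split; [rewrite /set_inv invgK|].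
have L1 : L 1 by rewrite -(mulVg k0); apply: KL.
have [A [SA Amax]] := @exists_sep G K k0 Kk0.
pose Y := {x : G | A x}.
pose ubY := @ubS _ Bor A.
have cf : forall x, {s | A s /\ exists g, lcoset g K x /\ lcoset g K s}.
  move=> x; apply: constructive_indefinite_description; exact: Amax.
pose f : G -> Y := fun x => exist _ (proj1_sig (cf x)) (proj1 (proj2_sig (cf x))).
have fL x : exists l1, L l1 /\ proj1_sig (f x) = x * l1.
  rewrite /f /=; case: (cf x) => s [As [g [[k1 K1 e1] [k2 K2 e2]]]] /=.
  exists (k1^-1 * k2); split; first exact: KL.
  by rewrite e1 e2 mulgA mulgK.
have fL' x : exists l1, L l1 /\ x = proj1_sig (f x) * l1.
  rewrite /f /=; case: (cf x) => s [As [g [[k1 K1 e1] [k2 K2 e2]]]] /=.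
  exists (k2^-1 * k1); split; first exact: KL.
  by rewrite e1 e2 mulgA mulgK.
have ubVY D : Bor D -> ubY (@VY _ A (fun x => D x \/ L x)).
  by move=> BD; apply: VY_ub; [apply: Bun | right].
exists Y, ubY; split.
- exact: lss_ubS hB BL L1.
- exists f, (@proj1_sig G A); split.
  + split.
    * move=> B [V [[Vcov [C BC HC]] [W VW BW]]].
      have [h Hh] := HC W VW.
      apply: (@bndG _ _ _ _ h _ hB BL L1 (Bmul _ _ BC BL)).
      move=> x Bx; have [c Cc ec] := Hh _ (BW _ Bx).
      have [l1 [Ll1 el1]] := fL' x.
      exists (c * l1); first by exists c, l1.
      by rewrite el1 ec mulgA.
    * move=> U [Ucov [C BC HC]].
      exists (@VY _ A (fun x => set_mul C L x \/ L x)); first exact: (ubVY _ (Bmul _ _ BC BL)).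
      move=> T [B UB ->].
      have [S [h ->] sub] := HC B UB.
      exists (fun y => lcoset h (fun x => set_mul C L x \/ L x) (proj1_sig y)).
        by exists h.
      move=> y [x Bx ->].
      have [c Cc ec] := sub x Bx.
      have [l1 [Ll1 el1]] := fL x.
      exists (c * l1); first by left; exists c, l1.
      by rewrite el1 ec mulgA.
  + split.
    * move=> B [U [[Ucov [C BC HC]] [W UW BW]]].
      have [S [h ->] sub] := HC W UW.
      exists (@VY _ A (fun x => C x \/ L x)); split; first exact: (ubVY _ BC).
      exists (fun y => lcoset h (fun x => C x \/ L x) (proj1_sig y)); first by exists h.
      move=> y /BW /sub [c Cc ec]; by exists c; [left|].
    * move=> V [Vcov [C BC HC]].
      exists (UG (fun x => C x \/ L x)).
        by apply: UG_ub; [apply: Bun | right].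
      move=> T [W VW ->].
      have [h Hh] := HC W VW.
      exists (lcoset h (fun x => C x \/ L x)); first by exists h.
      move=> x [y Wy ->]; have [c Cc ec] := Hh y Wy.
      by exists c; [left|].
  + exists (UG L); first exact: UG_ub.
    move=> x; exists (lcoset x L); first by exists x.
    have [l1 [Ll1 el1]] := fL x.
    split; first by exists l1.
    by exists 1; rewrite ?mulg1.
  + exists (@VY _ A L); first exact: VY_ub.
    move=> y; exists (fun y' => lcoset (proj1_sig y) L (proj1_sig y')).
      by exists (proj1_sig y).
    have [l1 [Ll1 el1]] := fL (proj1_sig y).
    split; first by exists l1.
    by exists 1; rewrite ?mulg1.
- move=> V [Vcov [C BC HC]].
  have [gs Hgs] := HK C BC.
  exists (length gs) => W VW.
  have [h Hh] := HC W VW.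
  case: (classic (exists y0, W y0)) => [[y0 Wy0]|nW]; last first.
    by exists nil; split=> // x Wx; exfalso; apply: nW; exists x.
  pose pick g := epsilon (inhabits y0)
     (fun y => W y /\ lcoset (h * g) K (proj1_sig y)).
  exists (map pick gs); split; first by rewrite length_map.
  move=> x Wx.
  have [c Cc ec] := Hh x Wx.
  have [g Ing [k Kk ek]] := Hgs c Cc.
  have Px : W x /\ lcoset (h * g) K (proj1_sig x).
    by split=> //; exists k => //; rewrite ec ek mulgA.
  have [Wp Pp] := epsilon_spec (inhabits y0)
     (fun y => W y /\ lcoset (h * g) K (proj1_sig y)) (ex_intro _ x Px).
  have -> : x = pick g.
    apply: sig_eq; apply: (SA _ _ (h * g)) => //.
      by case: x {Wx ec Px}.
    by case: (pick g) Pp {Wp}.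
    exact: Px.2.
  exact: in_map.
Qed.

Theorem proposition8p3 (G : groupType) (Bor : fam G) :
  is_group_bornology Bor ->
  (has_bounded_geometry (group_ub Bor) <->
   exists2 K, Bor K &
     forall B, Bor B ->
       exists gs : list G, subset_of B (fun x => exists2 g, In g gs & lcoset g K x)).
Proof.
move=> hB; split; [exact: forward | exact: backward].
Qed.
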